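(* Let $\mathcal{G}=(V,\mathcal{E})$ be an $\ell$-uniform hypergraph with $m$ edges and $n$ vertices such that $n\ge3\ell$. Then there is a partition $V=V_1\dot\cup V_2$ with $|V_1|=\lfloor 2n/3\rfloor$ and $|V_2|=\lceil n/3\rceil$ such that at least $m\cdot\ell/2^{\ell+2}$ edges of $\mathcal{E}$ have exactly one vertex in $V_2$. *)

(* Defs.v *)
From mathcomp Require Import all_boot.
Set Implicit Arguments. Unset Strict Implicit. Unset Printing Implicit Defensive.

Definition uniform_hypergraph (V : finType) (l : nat) (E : {set {set V}}) : Prop :=
  forall e, e \in E -> #|e| = l.

Definition one_in (V : finType) (E : {set {set V}}) (V2 : {set V}) : nat :=
  #|[set e in E | #|e :&: V2| == 1]|.

(* Main.v *)
Require Import Defs.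
From mathcomp Require Import all_boot.
From mathcomp Require Import zify.

Lemma binom_step M j : 2 * j <= M.+1 -> 'C(M.+1, j) <= 2 * 'C(M, j).
Proof.
move=> hj.
have h := mul_bin_down M.+1 j.
have hp : 0 < M.+1 - j by lia.
rewrite -(leq_pmul2l hp) -h /= mulnA.
apply: leq_mul (leqnn _); lia.
Qed.

Lemma binom_iter N j t : 2 * j + t <= N -> 'C(N, j) <= 2 ^ t * 'C(N - t, j).
Proof.
elim: t => [|t IH] h; first by rewrite subn0 expn0 mul1n.
have h' : 2 * j + t <= N by lia.
have IH' := IH h'.
have E : N - t = (N - t.+1).+1 by lia.
have st : 'C(N - t, j) <= 2 * 'C(N - t.+1, j).
  rewrite E; apply: binom_step; lia.
apply: (leq_trans IH').
rewrite expnS -mulnA mulnCA.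
exact: leq_mul (leqnn _) st.
Qed.

Lemma card_sep (T : finType) (A : {set T}) (P : pred T) :
  #|[set x in A | P x]| = \sum_(x in A) (P x : nat).
Proof.
rewrite -sum1_card big_mkcond [RHS]big_mkcond /=.
by apply: eq_bigr => x _; rewrite inE; case: (x \in A); case: (P x).
Qed.

Lemma count_lb (V : finType) (e : {set V}) (k : nat) :
  0 < k ->
  #|e| * 'C(#|V| - #|e|, k.-1) <=
  #|[set A in [set A : {set V} | #|A| == k] | #|e :&: A| == 1]|.
Proof.
move=> kpos.
pose Bs := [set B : {set V} | B \subset ~: e & #|B| == k.-1].
pose D := setX e Bs.
pose f := fun p : V * {set V} => p.1 |: p.2.
have cD : #|D| = #|e| * 'C(#|V| - #|e|, k.-1).
  by rewrite cardsX cards_draws -(cardsC e) addKn.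
have notin : forall x B, B \in Bs -> x \in e -> x \notin B.
  move=> x B; rewrite inE => /andP[/subsetP sB _] xe; apply/negP => /sB.
  by rewrite inE xe.
have inj : {in D &, injective f}.
  move=> [x B] [y C]; rewrite !inE /= => /andP[xe BB] /andP[ye CC] eq.
  rewrite /f /= in eq.
  have Bs1 : B \in Bs by rewrite inE.
  have Cs1 : C \in Bs by rewrite inE.
  have exy : x = y.
    have : x \in y |: C by rewrite -eq setU11.
    rewrite in_setU1 => /orP[/eqP //|xC].
    by have := notin x C Cs1 xe; rewrite xC.
  subst y; congr pair; apply/setP => z.
  apply/idP/idP => zin.
  - have : z \in x |: C by rewrite -eq setU1r.
    rewrite in_setU1 => /orP[/eqP zx|//].
    by subst z; have := notin x B Bs1 xe; rewrite zin.
  - have : z \in x |: B by rewrite eq setU1r.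
    rewrite in_setU1 => /orP[/eqP zx|//].
    by subst z; have := notin x C Cs1 xe; rewrite zin.
rewrite -cD -(card_in_imset inj).
apply: subset_leq_card; apply/subsetP => A /imsetP[[x B]].
rewrite !inE /= => /andP[xe BB] ->.
have Bs1 : B \in Bs by rewrite inE.
move: BB => /andP[/subsetP sB /eqP cB].
rewrite /f /= cardsU1 (notin x B Bs1 xe) cB /=.
apply/andP; split; first by apply/eqP; lia.
have -> : e :&: (x |: B) = [set x].
  apply/setP => z; rewrite !inE.
  apply/idP/idP.
  - move=> /andP[ze /orP[//|zB]].
    by have := sB z zB; rewrite inE ze.
  - by move=> /eqP ->; rewrite eqxx xe.
by rewrite cards1.
Qed.

Theorem propositionB1 (V : finType) (l : nat) (E : {set {set V}}) :
  uniform_hypergraph l E ->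
  3 * l <= #|V| ->
  exists V2 : {set V},
    #|~: V2| = (2 * #|V|) %/ 3 /\
    #|V2| = (#|V| + 2) %/ 3 /\
    #|E| * l <= one_in E V2 * 2 ^ (l + 2).
Proof.
move=> Hu Hn.
set n := #|V| in Hn *.
set k := (n + 2) %/ 3.
pose S := [set A : {set V} | #|A| == k].
have cS : #|S| = 'C(n, k) by rewrite card_draws.
have Spos : 0 < #|S| by rewrite cS bin_gt0 /k; lia.
have [A0 A0S] : exists A0, A0 \in S.
  by move: Spos; rewrite card_gt0 => /set0Pn.
have sizes : forall A, A \in S -> #|~: A| = (2 * n) %/ 3 /\ #|A| = (n + 2) %/ 3.
  move=> A; rewrite inE => /eqP cA; split; last by [].
  have := cardsC A; rewrite cA -/n /k; lia.
have [l0|lpos] := posnP l.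
  exists A0; have [h1 h2] := sizes A0 A0S; split; first by [].
  by split; [|rewrite l0 muln0].
have kpos : 0 < k by rewrite /k; lia.
pose C2 := 'C(n - l, k.-1).
have sumlb : #|E| * (l * C2) <= \sum_(A in S) one_in E A.
  rewrite (eq_bigr (fun A => \sum_(e in E) ((#|e :&: A| == 1) : nat)));
    last by move=> A _; rewrite /one_in card_sep.
  rewrite exchange_big /= -sum_nat_const.
  apply: leq_sum => e eE.
  rewrite -card_sep /C2 -(Hu e eE).
  exact: count_lb.
case: (@arg_maxnP _ A0 (mem S) (one_in E) A0S) => A AS Amax.
exists A; have [h1 h2] := sizes A AS; split; first by [].
split; first by [].
have H1 : #|E| * (l * C2) <= #|S| * one_in E A.
  apply: (leq_trans sumlb); rewrite -sum_nat_const.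
  by apply: leq_sum => B BS; apply: Amax.
have C2pos : 0 < C2 by rewrite /C2 bin_gt0 /k; lia.
have H2a : 'C(n, k) <= 3 * 'C(n.-1, k.-1).
  have hd := mul_bin_diag n k.-1.
  rewrite prednK // in hd.
  rewrite -(leq_pmul2l kpos) -hd mulnA.
  apply: leq_mul (leqnn _); rewrite /k; lia.
have H2b : 'C(n.-1, k.-1) <= 2 ^ (l.-1) * C2.
  have := @binom_iter n.-1 k.-1 l.-1.
  have -> : n.-1 - l.-1 = n - l by lia.
  apply; rewrite /k; lia.
have H2 : #|S| <= 2 ^ (l + 2) * C2.
  rewrite cS; apply: (leq_trans H2a).
  have -> : l + 2 = l.-1 + 3 by lia.
  rewrite expnD -mulnA; apply: leq_trans (leq_mul (leqnn 3) H2b) _.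
  by rewrite mulnCA; apply: leq_mul => //; apply: leq_mul.
have H3 := leq_trans H1 (leq_mul H2 (leqnn (one_in E A))).
rewrite -(leq_pmul2r C2pos).
move: H3; set o := one_in E A; set P := 2 ^ (l + 2); set x := #|E|.
by rewrite mulnA [P * C2 * o]mulnAC [P * o]mulnC.
Qed.
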